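(* Let $n\geq 3$ and let $A=(a_{ij})\in\mathcal{M}_{n}(\mathbb{Z})$ with $\det(A)\neq 0$. Let $\Lambda=\{Az: z\in\mathbb{Z}^n\}$ be the lattice generated by the columns of $A$, and let $\mathcal{F}_A$ be its set of $A$-feasible lattice vectors. Let $b=\max\{|a_{ij}| : 1\leq i,j\leq n\}$. If $\lambda=Az\in\mathcal{F}_A$ with $z=(z_1,\ldots,z_n)\in\mathbb{Z}^n$, then $\log(|z_i|)\leq n(\log(n)+\log(b))$ for all $1\leq i\leq n$.
   Context: Logarithms are in base $2$. $\|\cdot\|$ is the Euclidean norm, $d(x,y)=\|x-y\|$, and $d(x,\Lambda)=\min_{\lambda\in\Lambda}d(x,\lambda)$. The fundamental parallelepiped of $\Lambda$ with respect to $A$ is $\mathcal{P}_A=\{Ay : y\in[0,1)^n\}$. A lattice vector $\lambda\in\Lambda$ is $A$-feasible if there exists $x\in\mathcal{P}_A$ with $d(\lambda,x)=d(x,\Lambda)$; $\mathcal{F}_A$ is the set of $A$-feasible lattice vectors. *)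

(* Defs.v *)
From HB Require Import structures.
From mathcomp Require Import all_boot all_order all_algebra.
From mathcomp Require Import all_classical all_reals.
From mathcomp Require Import exp.
Set Implicit Arguments. Unset Strict Implicit. Unset Printing Implicit Defensive.
Import Order.TTheory GRing.Theory Num.Theory.
Local Open Scope ring_scope.

(* base-2 logarithm (ln 0 = 0 in mathcomp-analysis) *)
Definition log2 {R : realType} (x : R) : R := ln x / ln 2.

Definition dist {R : realType} {n : nat} (x y : 'cV[R]_n) : R :=
  Num.sqrt (\sum_(i < n) (x i 0 - y i 0) ^+ 2).

Definition realmx {R : realType} {m n : nat} (A : 'M[int]_(m, n)) : 'M[R]_(m, n) :=
  map_mx (fun a : int => (a%:~R : R)) A.

Definition latvec {R : realType} {n : nat} (A : 'M[int]_n) (z : 'cV[int]_n) : 'cV[R]_n :=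
  realmx A *m realmx z.

Definition in_fund_par {R : realType} {n : nat} (A : 'M[int]_n) (x : 'cV[R]_n) : Prop :=
  exists y : 'cV[R]_n, (forall i, 0 <= y i 0 < 1) /\ x = realmx A *m y.

(* lam is A-feasible: lam is in the lattice and there is x in P_A with
   d(lam, x) = d(x, Lambda) = min over lattice vectors *)
Definition feasible {R : realType} {n : nat} (A : 'M[int]_n) (lam : 'cV[R]_n) : Prop :=
  (exists z : 'cV[int]_n, lam = latvec A z) /\
  exists x : 'cV[R]_n, in_fund_par A x /\
    forall z' : 'cV[int]_n, dist lam x <= dist (latvec A z') x.

Definition maxabs {n : nat} (A : 'M[int]_n) : int :=
  \big[Num.max/0]_(ij : 'I_n * 'I_n) `|A ij.1 ij.2|.

(* Main.v *)
Require Import Defs.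
From HB Require Import structures.
From mathcomp Require Import all_boot all_order all_algebra.
From mathcomp Require Import all_classical all_reals.
From mathcomp Require Import exp.
From mathcomp Require Import ring lra zify fingroup perm.
Import Order.TTheory GRing.Theory Num.Theory.
Local Open Scope ring_scope.

Lemma det_bound (R : realType) (m : nat) (M : 'M[R]_m) (B : R) :
  0 <= B -> (forall i j, `|M i j| <= B) -> `|\det M| <= m`!%:R * B ^+ m.
Proof.
move=> B0 hM; rewrite /determinant.
apply: (le_trans (ler_norm_sum _ _ _)).
apply: (@le_trans _ _ (\sum_(s : 'S_m) B ^+ m)).
  apply: ler_sum => s _.
  rewrite normrM normrX normrN1 expr1n mul1r normr_prod.
  have -> : B ^+ m = \prod_(i < m) B by rewrite prodr_const card_ord.
  by apply: ler_prod => i _; rewrite normr_ge0 hM.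
by rewrite sumr_const card_Sn mulr_natl.
Qed.

Lemma sum_sqr_le (R : realType) (n : nat) (a : 'I_n -> R) :
  (\sum_i a i) ^+ 2 <= n%:R * \sum_i a i ^+ 2.
Proof.
set S1 := \sum_i a i; set S2 := \sum_i a i ^+ 2.
have h : 0 <= \sum_i (n%:R * a i - S1) ^+ 2.
  by apply: sumr_ge0 => i _; apply: sqr_ge0.
have e : \sum_i (n%:R * a i - S1) ^+ 2 =
   n%:R ^+ 2 * S2 - 2%:R * n%:R * S1 * S1 + n%:R * S1 ^+ 2.
  have -> : \sum_i (n%:R * a i - S1) ^+ 2 =
    \sum_i (n%:R ^+ 2 * a i ^+ 2 - 2%:R * n%:R * S1 * a i + S1 ^+ 2).
    by apply: eq_bigr => i _; ring.
  rewrite big_split /= sumrB -!mulr_sumr sumr_const card_ord mulr_natl.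
  rewrite -/S1 -/S2 -mulr_natl; ring.
rewrite e in h.
have h2 : 0 <= n%:R * (n%:R * S2 - S1 ^+ 2) by nra.
case: (posnP n) => [n0|hn].
  by rewrite /S1 /S2; clear e h h2 S1 S2; move: a; rewrite n0 => a; rewrite !big_ord0 expr0n /= mul0r.
have hn' : 0 < n%:R :> R by rewrite ltr0n.
move: h2; rewrite pmulr_rge0 //; lra.
Qed.

Lemma fact_le2 k : ((k.+2)`! <= 2 * (k.+2) ^ k)%N.
Proof.
elim: k => [//|k IH].
rewrite factS.
apply: (@leq_trans ((k.+3) * (2 * (k.+2) ^ k))); first exact: leq_mul (leqnn _) IH.
rewrite mulnCA (expnS (k.+3)) leq_mul2l; apply/orP; right.
apply: leq_mul => //; case: k {IH} => [//|k]; by rewrite leq_exp2r.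
Qed.

Lemma nat_final m : (2 <= m)%N -> (1 + (m.+1)`! * m.+1 <= (m.+1) ^ (m.+1))%N.
Proof.
case: m => [//|[//|k]] _.
have h := fact_le2 k.+1.
rewrite expnS.
have h2 : ((k.+3) ^ k.+1 >= 1)%N by rewrite expn_gt0.
rewrite [in X in (_ <= X)%N]expnS.
nia.
Qed.

Lemma adj_bound (R : realType) (n : nat) (M : 'M[R]_n) (B : R) :
  0 <= B -> (forall i j, `|M i j| <= B) ->
  forall i j, `|\adj M i j| <= (n.-1)`!%:R * B ^+ n.-1.
Proof.
case: n M => [|m] M B0 hM i j; first by case: i.
rewrite mxE /cofactor normrM normrX normrN1 expr1n mul1r /=.
by apply: det_bound => // k l; rewrite !mxE.
Qed.

Theorem proposition2p4 (R : realType) (n : nat) (A : 'M[int]_n) (z : 'cV[int]_n) :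
  (3 <= n)%N -> \det A != 0 ->
  feasible A (latvec (R:=R) A z) ->
  forall i : 'I_n,
    log2 ((`|z i 0|)%:~R : R) <= n%:R * (log2 (n%:R : R) + log2 ((maxabs A)%:~R : R)).
Proof.
move=> hn hdet [_ [x [[y [hy hx]] hmin]]] i.
set rA := @Defs.realmx R _ _ A.
set B := ((maxabs A)%:~R : R).
set rz := @Defs.realmx R _ _ z.
have hAB : forall k j, `|rA k j| <= B.
  move=> k j; rewrite mxE -intr_norm ler_int.
  exact: (le_bigmax 0 (fun ij : 'I_n * 'I_n => `|A ij.1 ij.2|) (k, j)).
have B0 : 0 <= B by apply: le_trans (hAB i i).
have hdetR : \det rA = (\det A)%:~R by exact: (det_map_mx ( *~%R (1:R)) A).
have hdet1 : 1 <= `|\det rA|.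
  by rewrite hdetR norm_intr_ge1 ?intr_int // intr_eq0.
have B1 : 1 <= B.
  have := @det_bound R n rA B B0 hAB; move/(le_trans hdet1) => h.
  have : 0 < B.
    rewrite lt_def B0 andbT; apply/eqP => hB0; move: h; rewrite hB0 expr0n.
    have -> : (n == 0%N) = false by case: (n) hn.
    by rewrite mulr0 ler10.
  by rewrite /B ltr0z gtz0_ge1 -(ler1z R).
have hlat0 : latvec (R:=R) A 0 = 0.
  by apply/matrixP => k l; rewrite !mxE big1 // => j _; rewrite !mxE mulr0.
have hS : \sum_k (latvec (R:=R) A z k 0 - x k 0) ^+ 2 <= \sum_k (0 - x k 0) ^+ 2.
  have := hmin 0; rewrite hlat0 /dist ler_sqrt //.
    move=> h; apply: le_trans h _; rewrite le_eqVlt; apply/orP; left; apply/eqP; apply: eq_bigr => k _; by rewrite mxE.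
  by apply: (@sumr_ge0 R) => k _; rewrite sqr_ge0.
have hxb : forall k, `|x k 0| <= n%:R * B.
  move=> k; rewrite hx mxE; apply: le_trans (ler_norm_sum _ _ _) _.
  apply: (@le_trans _ _ (\sum_(j < n) B)); last by rewrite sumr_const card_ord mulr_natl.
  apply: (@ler_sum R) => j _.
  rewrite normrM -[B]mulr1; apply: ler_pM => //.
  by rewrite ler_norml; have := hy j; case/andP => h1 h2; apply/andP; split; lra.
have hS2 : \sum_k (0 - x k 0) ^+ 2 <= n%:R * (n%:R * B) ^+ 2.
  apply: (@le_trans _ _ (\sum_(k < n) (n%:R * B) ^+ 2)); last by rewrite sumr_const card_ord -[_ *+ n]mulr_natl.
  apply: (@ler_sum R) => k _.
  have := hxb k; rewrite ler_norml => /andP [h1 h2].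
  have : 0 <= n%:R * B :> R by rewrite mulr_ge0.
  nra.
set W := rA *m rz - x.
have hW : forall k, W k 0 = latvec (R:=R) A z k 0 - x k 0.
  by move=> k; rewrite /W [LHS]mxE [X in _ + X]mxE.
have hW2 : \sum_k `|W k 0| <= n%:R ^+ 2 * B.
  have h1 := @sum_sqr_le R n (fun k => `|W k 0|).
  have h2 : \sum_k `|W k 0| ^+ 2 <= n%:R * (n%:R * B) ^+ 2.
    apply: le_trans hS2; apply: le_trans hS; apply: (@ler_sum R) => k _.
    by rewrite hW real_normK ?num_real.
  have h3 : 0 <= \sum_k `|W k 0| by apply: (@sumr_ge0 R) => k _.
  have h4 : 0 <= n%:R ^+ 2 * B :> R by rewrite mulr_ge0 // exprn_ge0.
  have h5 : (\sum_k `|W k 0|) ^+ 2 <= (n%:R ^+ 2 * B) ^+ 2.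
    apply: le_trans h1 _; rewrite (_ : (n%:R ^+ 2 * B) ^+ 2 = n%:R * (n%:R * (n%:R * B) ^+ 2)); last by ring.
    by rewrite ler_pM2l ?ltr0n ?(leq_trans _ hn).
  nra.
have hadj : \det rA * (rz i 0 - y i 0) = \sum_j \adj rA i j * W j 0.
  have hm : \adj rA *m W = \det rA *: (rz - y).
    by rewrite /W hx -mulmxBr mulmxA mul_adj_mx mul_scalar_mx.
  have := congr1 (fun M : 'cV[R]_n => M i 0) hm; rewrite [LHS]mxE => ->.
  by rewrite !mxE.
have hadjb := @adj_bound R n rA B B0 hAB i.
have hzy : `|rz i 0 - y i 0| <= (n.-1)`!%:R * B ^+ n.-1 * (n%:R ^+ 2 * B).
  apply: le_trans (_ : `|\det rA * (rz i 0 - y i 0)| <= _).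
    by rewrite normrM ler_peMl.
  rewrite hadj; apply: le_trans (ler_norm_sum _ _ _) _.
  apply: le_trans (_ : \sum_j (n.-1)`!%:R * B ^+ n.-1 * `|W j 0| <= _).
    apply: (@ler_sum R) => j _; rewrite normrM; apply: ler_pM => //.
  rewrite -mulr_sumr; apply: ler_pM => //.
    by rewrite mulr_ge0 ?exprn_ge0.
  by apply: (@sumr_ge0 R) => j _.
have hf : forall k, (3 <= k)%N -> (1 + k`! * k <= k ^ k)%N /\ ((k.-1)`! * k ^ 2 = k`! * k)%N.
  case=> [//|k] hk; split; first by apply: nat_final.
  by rewrite factS /=; lia.
have [hf1 hf2] := hf n hn.
have hBn : B ^+ n.-1 * B = B ^+ n.
  by rewrite -exprSr prednK // (leq_trans _ hn).
have hzb : `|rz i 0| <= (n%:R * B) ^+ n.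
  have e : (n.-1)`!%:R * B ^+ n.-1 * (n%:R ^+ 2 * B) = (n`! * n)%:R * B ^+ n :> R.
    by rewrite -hBn -hf2 natrM natrX; ring.
  rewrite e in hzy.
  have hyi : `|y i 0| <= 1.
    by rewrite ler_norml; have := hy i; case/andP => h1 h2; apply/andP; split; lra.
  have hB1 : 1 <= B ^+ n by exact: exprn_ege1.
  have hc : (1 + (n`! * n))%:R <= (n ^ n)%:R :> R by rewrite ler_nat.
  rewrite natrD natrX in hc.
  have hc0 : 0 <= (n`! * n)%:R :> R by [].
  rewrite exprMn.
  have -> : rz i 0 = (rz i 0 - y i 0) + y i 0 by ring.
  apply: le_trans (ler_normD _ _) _.
  nra.
have hZ : (`|z i 0|)%:~R = `|rz i 0| by rewrite intr_norm mxE.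
rewrite hZ.
have hl2 : 0 < ln (2 : R) by apply: ln_gt0; lra.
have hn1 : 1 <= n%:R :> R by rewrite ler1n (leq_trans _ hn).
rewrite /log2 -mulrDl mulrA ler_pM2r ?invr_gt0 //.
have hlnn := ln_ge0 hn1; have hlnB := ln_ge0 B1.
have hn0 : 0 <= n%:R :> R by [].
have [hz0|hzpos] := eqVneq (rz i 0) 0.
  by rewrite hz0 normr0 ln0 // mulr_ge0 // addr_ge0.
have hp : 0 < `|rz i 0| by rewrite normr_gt0.
have hnB : 0 < n%:R * B by rewrite mulr_gt0 //; lra.
apply: le_trans (_ : ln ((n%:R * B) ^+ n) <= _).
  by rewrite ler_ln // posrE // exprn_gt0.
rewrite lnXn // lnM ?posrE; [|lra|lra].
by rewrite mulr_natl.
Qed.
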